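(* Every connected graph $G$ of order $n \ge 3$ is an induced subgraph of a locally Dirac graph.
   Context: A graph $H$ is locally Dirac if for every vertex $v \in V(H)$ and every $u \in N(v)$, $\deg_{\langle N(v)\rangle}(u) \ge \deg_H(v)/2$, where $N(v)$ is the open neighbourhood of $v$ and $\langle N(v)\rangle$ the subgraph induced by it (i.e. $\langle N(v)\rangle$ satisfies Dirac's minimum degree condition for every $v$). *)

(* Defs.v *)
From mathcomp Require Import all_boot.
Set Implicit Arguments. Unset Strict Implicit. Unset Printing Implicit Defensive.

Definition simple_graph (T : finType) (e : rel T) : Prop :=
  symmetric e /\ irreflexive e.

Definition connected_graph (T : finType) (e : rel T) : Prop :=
  forall x y : T, connect e x y.

Definition nbhd (T : finType) (e : rel T) (v : T) : {set T} := [set u | e v u].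

Definition deg_in_nbhd (T : finType) (e : rel T) (v u : T) : nat :=
  #|[set w in nbhd e v | e u w]|.

(* locally Dirac: for all v and u in N(v), deg_<N(v)>(u) >= deg(v)/2,
   written without division as deg(v) <= 2 * deg_<N(v)>(u). *)
Definition locally_dirac (T : finType) (e : rel T) : Prop :=
  forall v u : T, u \in nbhd e v -> #|nbhd e v| <= 2 * deg_in_nbhd e v u.

Definition induced_subgraph (T U : finType) (e : rel T) (h : rel U) : Prop :=
  exists f : T -> U, injective f /\ forall x y : T, h (f x) (f y) = e x y.

(* Main.v *)
Require Import Defs.
From mathcomp Require Import all_boot.
From mathcomp Require Import zify.
From Stdlib Require Import Lia.

Section Aux.
Variable (T : finType) (e : rel T).

Definition hrel (a b : T + option T) : bool :=
  match a, b with
  | inl x, inl y => e x y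
  | inr i, inr j => i != j
  | _, _ => true
  end.

Definition Kset : {set (T + option T)%type} := [set inr j | j : option T].

Lemma card_K : #|Kset| = #|T|.+1.
Proof. rewrite card_imset; last by move=> ??[]. by rewrite card_option. Qed.

Lemma card_KD a : #|T| <= #|Kset :\ a|.
Proof.
have := cardsD1 a Kset; rewrite card_K. case: (a \in Kset) => /=; lia.
Qed.

Lemma card_L : #|[set inl x | x : T] : {set (T + option T)%type}| = #|T|.
Proof. rewrite card_imset //; by move=> ??[]. Qed.

End Aux.

Theorem mainTheorem3 (T : finType) (e : rel T) :
  simple_graph e -> connected_graph e -> 3 <= #|T| ->
  exists (U : finType) (h : rel U),
    simple_graph h /\ locally_dirac h /\ induced_subgraph e h.
Proof.
move=> [es ei] _ n3.
exists (T + option T)%type, (hrel T e).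
have hirr : irreflexive (hrel T e) by case=> [x|j] /=; rewrite ?ei ?eqxx.
have hsym : symmetric (hrel T e).
  by case=> [x|i] [y|j] //=; rewrite ?es // eq_sym.
split; first by [].
split; last by exists inl; split=> //; move=> ??[].
move=> v u uN.
have cardU : #|{: T + option T}| = (#|T|).*2.+1.
  by rewrite card_sum card_option -addnn addnS.
have Nle : #|nbhd (hrel T e) v| <= (#|T|).*2.
  have : nbhd (hrel T e) v \proper [set: (T + option T)%type].
    apply/properP; split; first exact: subsetT.
    by exists v; rewrite ?in_setT // inE hirr.
  by move/proper_card; rewrite cardsT cardU.
suff : #|T| <= deg_in_nbhd (hrel T e) v u.
  by move=> H; apply: (leq_trans Nle); rewrite -mul2n leq_mul2l H orbT.
rewrite /deg_in_nbhd.
have Hsub : forall v' u' (S : {set (T + option T)%type}),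
   (forall w, w \in S -> hrel T e v' w && hrel T e u' w) -> #|S| <= #|[set w in nbhd (hrel T e) v' | hrel T e u' w]|.
  move=> v' u' S HS; apply: subset_leq_card; apply/subsetP=> w /HS /andP[a b].
  by rewrite !inE a b.
clear Nle; move: uN Hsub; rewrite inE.
case: v => [x|k]; case: u => [y|j] Hvu Hsub.
- apply: leq_trans (@card_KD T (inr None)) _; apply: Hsub => w.
  by rewrite !inE => /andP[_ /imsetP[z _ ->]].
- apply: leq_trans (@card_KD T (inr j)) _; apply: Hsub => w.
  by rewrite !inE => /andP[H /imsetP[z _ Ez]]; move: H; rewrite Ez /= eq_sym.
- apply: leq_trans (@card_KD T (inr k)) _; apply: Hsub => w.
  by rewrite !inE => /andP[H /imsetP[z _ Ez]]; move: H; rewrite Ez /= eq_sym => ->.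
- rewrite -(card_L T); apply: Hsub => w /imsetP[z _ ->] //.
Qed.
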